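(* There are no binary self-orthogonal codes with parameters $[45,6,22]$, $[53,6,26]$, $[60,6,30]$, $[47,7,22]$, $[71,7,34]$, $[79,7,38]$, $[93,7,46]$, $[102,7,50]$, $[109,7,54]$, $[117,7,58]$, or $[124,7,62]$.
   Context: A binary linear $[n,k,d]$ code $C$ is self-orthogonal if $C\subseteq C^\perp$ with respect to the standard inner product over $\mathbb{F}_2$. *)

(* Defs.v *)
From mathcomp Require Import all_boot all_algebra.
Set Implicit Arguments. Unset Strict Implicit. Unset Printing Implicit Defensive.
Import GRing.Theory.
Local Open Scope ring_scope.

(* A binary linear code of length n is a subspace of F_2^n, represented (as in
   mathcomp's mxalgebra) by a square matrix C : 'M['F_2]_n whose row space is the
   code; the codewords are the row vectors v with (v <= C)%MS. *)

Definition codeword (n : nat) (C : 'M['F_2]_n) (v : 'rV['F_2]_n) : bool :=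
  (v <= C)%MS.

Definition code_dim (n : nat) (C : 'M['F_2]_n) : nat := \rank C.

Definition wt (n : nat) (v : 'rV['F_2]_n) : nat := #|[set i | v 0 i != 0]|.

Definition min_dist (n : nat) (C : 'M['F_2]_n) (d : nat) : Prop :=
  (exists2 v, codeword C v & (v != 0) && (wt v == d)) /\
  (forall v, codeword C v -> v != 0 -> (d <= wt v)%N).

Definition is_nkd_code (n k d : nat) (C : 'M['F_2]_n) : Prop :=
  code_dim C = k /\ min_dist C d.

Definition dotF2 (n : nat) (u v : 'rV['F_2]_n) : 'F_2 := \sum_(i < n) u 0 i * v 0 i.

Definition in_dual (n : nat) (C : 'M['F_2]_n) (v : 'rV['F_2]_n) : Prop :=
  forall u, codeword C u -> dotF2 u v = 0.

Definition self_orthogonal (n : nat) (C : 'M['F_2]_n) : Prop :=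
  forall v, codeword C v -> in_dual C v.

(* Main.v *)
Require Import Defs.
From mathcomp Require Import all_boot all_algebra.
From mathcomp Require Import zify.
Set Implicit Arguments. Unset Strict Implicit. Unset Printing Implicit Defensive.
Import GRing.Theory.

Fixpoint gr (k d : nat) : nat :=
  if k is k'.+1 then d + gr k' (uphalf d) else 0.

Lemma gr_monod k : forall a b, (a <= b)%N -> (gr k a <= gr k b)%N.
Proof.
elim: k => //= k IH a b ab; apply: leq_add => //; apply: IH; exact: uphalf_leq.
Qed.

Lemma gr_monok k : forall d, (gr k d <= gr k.+1 d)%N.
Proof.
elim: k => //= k IH d; rewrite leq_add2l; exact: IH.
Qed.

Lemma gr_monok' k k' d : (k <= k')%N -> (gr k d <= gr k' d)%N.
Proof.
elim: k' => [|k' IH]; first by rewrite leqn0 => /eqP->.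
rewrite leq_eqVlt => /orP[/eqP->//|]; rewrite ltnS => /IH H.
exact: leq_trans H (gr_monok _ _).
Qed.

Definition wS n (S : {set 'I_n}) (v : 'rV['F_2]_n) : nat :=
  (\sum_(i < n) ((i \in S) && (v 0%R i != 0%R)))%N.

Lemma F2cases (x : 'F_2) : x = 0%R \/ x = 1%R.
Proof. by case: x => [[|[|]]] //= ? ; [left|right]; apply: val_inj. Qed.

Lemma wS_split n (S : {set 'I_n}) (v c : 'rV['F_2]_n) :
  (wS S v + wS S (v + c)%R =
  (wS (S :\: [set i | c 0%R i != 0%R]) v).*2 + wS S c)%N.
Proof.
rewrite /wS -big_split -mul2n big_distrr -big_split /=; apply: eq_bigr => i _.
rewrite !mxE in_setD in_set.
case: (i \in S); rewrite ?andbF //=;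
by case: (F2cases (v 0%R i)) => ->; case: (F2cases (c 0%R i)) => ->.
Qed.

Lemma card_split n (S : {set 'I_n}) (c : 'rV['F_2]_n) :
  (#|S| = #|S :\: [set i | c 0%R i != 0%R]| + wS S c)%N.
Proof.
rewrite -!sum1_card (big_mkcond (fun i => i \in S)) (big_mkcond (fun i => i \in _)) /wS -big_split /=.
apply: eq_bigr => i _; rewrite in_setD in_set.
by case: (i \in S); rewrite ?andbF //=; case: (c 0%R i != 0%R).
Qed.

Lemma griesmer n k : forall m (V : 'M['F_2]_(m, n)) (S : {set 'I_n}) d,
  \rank V = k ->
  (forall v : 'rV_n, (v <= V)%MS -> v != 0%R -> (d <= wS S v)%N) ->
  (gr k d <= #|S|)%N.
Proof.
elim: k => [//|k IH] m V S d rV Hd.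
have [v0 [v0V v0nz]] : exists v0 : 'rV_n, (v0 <= V)%MS /\ v0 != 0%R.
  case: (pickP (fun i => row i V != 0%R)) => [i Hi|H0].
    by exists (row i V); rewrite row_sub.
  have : V = 0%R by apply/row_matrixP => i; move: (H0 i) => /negbFE/eqP->; rewrite row0.
  by move=> V0; move: rV; rewrite V0 mxrank0.
pose P := fun v : 'rV['F_2]_n => (v <= V)%MS && (v != 0%R).
have Pv0 : P v0 by rewrite /P v0V v0nz.
case: (arg_minnP (wS S) Pv0) => c /andP[cV cnz] cmin.
set w := wS S c.
pose V' := (V :\: c)%MS.
have rV' : \rank V' = k.
  have := mxrank_cap_compl V c.
  by rewrite (capmx_idPr cV) rank_rV cnz rV add1n => -[].
have H := IH _ V' (S :\: [set i | c 0%R i != 0%R]) (uphalf w) rV'.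
have dw : (d <= w)%N by apply: Hd.
rewrite /= (card_split S c) -/w [X in (_ <= X)%N]addnC.
apply: (@leq_trans (w + gr k (uphalf w))).
  by apply: leq_add => //; apply: gr_monod; apply: uphalf_leq.
rewrite leq_add2l; apply: H => v vV' vnz.
have vV : (v <= V)%MS by apply: submx_trans vV' (diffmxSl _ _).
have vc : v != c.
  by apply: contraNneq cnz => E; rewrite -submx0 -(capmx_diff V c) sub_capmx; move: vV'; rewrite /V' E => H1; rewrite H1 submx_refl.
have vcV : ((v + c)%R <= V)%MS by rewrite addmx_sub.
have vcnz : (v + c)%R != 0%R.
  apply: contra vc; rewrite addr_eq0 => /eqP->.
  apply/eqP; apply/rowP => i; rewrite mxE; case: (F2cases (c 0%R i)) => ->; [exact: oppr0|by apply: val_inj].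
have h1 := cmin v (introT andP (conj vV vnz)).
have h2 : (w <= wS S (v + c)%R)%N by apply: cmin; rewrite /P vcV vcnz.
have Hs : (wS S v + wS S (v + c)%R = (wS (S :\: [set i | c 0%R i != 0%R]) v).*2 + w)%N by exact: wS_split.
rewrite leq_uphalf_double; lia.
Qed.

Definition inter n (u v : 'rV['F_2]_n) : nat :=
  (\sum_(i < n) ((u 0%R i != 0%R) && (v 0%R i != 0%R)))%N.

Lemma wtE n (v : 'rV['F_2]_n) : wt v = (\sum_(i < n) (v 0%R i != 0%R))%N.
Proof.
rewrite /wt -sum1_card big_mkcond /=; apply: eq_bigr => i _.
by rewrite in_set; case: (v 0%R i != 0%R).
Qed.

Lemma wt_wS n (v : 'rV['F_2]_n) : wS setT v = wt v.
Proof. by rewrite wtE /wS; apply: eq_bigr => i _; rewrite in_setT. Qed.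

Lemma wt_add n (u v : 'rV['F_2]_n) :
  (wt (u + v)%R + (inter u v).*2 = wt u + wt v)%N.
Proof.
rewrite !wtE /inter -mul2n big_distrr -!big_split /=; apply: eq_bigr => i _.
rewrite !mxE.
by case: (F2cases (v 0%R i)) => ->; case: (F2cases (u 0%R i)) => ->.
Qed.

Lemma inter_self n (u : 'rV['F_2]_n) : inter u u = wt u.
Proof. by rewrite wtE /inter; apply: eq_bigr => i _; rewrite andbb. Qed.

Lemma F2nat m : (m%:R : 'F_2)%R = ((odd m)%:R)%R.
Proof.
elim: m => // m IH; rewrite GRing.mulrS IH /=.
by case: (odd m) => /=; apply: val_inj.
Qed.

Lemma F2nat0 m : (m%:R : 'F_2)%R = 0%R -> ~~ odd m.
Proof. by rewrite F2nat; case: (odd m) => //= H; move: H; move/eqP. Qed.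

Lemma dot_inter n (u v : 'rV['F_2]_n) : dotF2 u v = ((inter u v)%:R)%R.
Proof.
rewrite /dotF2 /inter GRing.natr_sum; apply: eq_bigr => i _.
case: (F2cases (v 0%R i)) => ->; case: (F2cases (u 0%R i)) => ->;
by rewrite ?GRing.mulr0 ?GRing.mul0r ?GRing.mulr1.
Qed.

Definition qf n (v : 'rV['F_2]_n) : 'F_2 := (((wt v)./2)%:R)%R.

Lemma wt0 n : wt (0%R : 'rV['F_2]_n) = 0%N.
Proof. by rewrite wtE big1 // => i _; rewrite mxE. Qed.

Lemma qf_scale n (x : 'F_2) (w : 'rV['F_2]_n) : qf (x *: w)%R = (x * qf w)%R.
Proof.
case: (F2cases x) => ->; last by rewrite GRing.scale1r GRing.mul1r.
by rewrite GRing.scale0r GRing.mul0r /qf wt0.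
Qed.

Lemma evenE m : ~~ odd m -> m = (m./2).*2.
Proof. by move=> H; rewrite -{1}(odd_double_half m) (negbTE H). Qed.

Theorem proposition6p1 :
  forall (n k d : nat) (C : 'M['F_2]_n),
    (n, k, d) \in [:: (45, 6, 22); (53, 6, 26); (60, 6, 30); (47, 7, 22);
                      (71, 7, 34); (79, 7, 38); (93, 7, 46); (102, 7, 50);
                      (109, 7, 54); (117, 7, 58); (124, 7, 62)] ->
    is_nkd_code k d C -> ~ self_orthogonal C.
Proof.
move=> n k d C Hin [rk [_ Hmin]] SO.
have key : all (fun t : nat * nat * nat => let: (n, k, d) := t in
    (n < gr k.-1 d.+2) && (d %% 4 == 2))
  [:: (45, 6, 22); (53, 6, 26); (60, 6, 30); (47, 7, 22);
      (71, 7, 34); (79, 7, 38); (93, 7, 46); (102, 7, 50);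
      (109, 7, 54); (117, 7, 58); (124, 7, 62)] by [].
move/allP: key => /(_ _ Hin) /andP[Hgr /eqP Hd4].
have Hdot : forall u v : 'rV_n, (u <= C)%MS -> (v <= C)%MS -> ~~ odd (inter u v).
  move=> u v uC vC; apply: F2nat0; rewrite -dot_inter; exact: SO.
have Hev : forall u : 'rV_n, (u <= C)%MS -> ~~ odd (wt u).
  by move=> u uC; rewrite -inter_self; apply: Hdot.
have Hadd : forall u v : 'rV_n, (u <= C)%MS -> (v <= C)%MS ->
    qf (u + v)%R = (qf u + qf v)%R.
  move=> u v uC vC.
  have uvC : ((u + v)%R <= C)%MS by rewrite addmx_sub.
  have E1 := evenE (Hev _ uC); have E2 := evenE (Hev _ vC).
  have E3 := evenE (Hev _ uvC); have E4 := evenE (Hdot _ _ uC vC).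
  have W : (wt (u + v)%R + (inter u v).*2 = wt u + wt v)%N := wt_add u v.
  have E : ((wt (u + v)%R)./2 + ((inter u v)./2).*2 = (wt u)./2 + (wt v)./2)%N.
    move: E1 E2 E3 E4 W; generalize (wt (u+v)%R) (wt u) (wt v) (inter u v) => p q s t; lia.
  rewrite /qf -GRing.natrD -E GRing.natrD (F2nat (_.*2)) odd_double.
  by rewrite GRing.addr0.
pose B := row_base C.
pose r := \rank C.
pose a : 'cV['F_2]_r := (\col_j qf (row j B))%R.
pose D := (kermx a *m B)%R.
have BC : forall w : 'rV_n, (w <= B)%MS -> (w <= C)%MS.
  by move=> w; rewrite /B eq_row_base.
have qlin : forall x : 'rV_r, qf (x *m B)%R = ((x *m a)%R 0%R 0%R).
  move=> x; rewrite mulmx_sum_row mxE.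
  have base : ((0%R : 'rV['F_2]_n) <= C)%MS /\ qf (0%R : 'rV_n) = 0%R by rewrite sub0mx /qf wt0.
  have step : forall (j : 'I_r) (y1 : 'rV_n) (y2 : 'F_2), true ->
      (y1 <= C)%MS /\ qf y1 = y2 ->
      ((x 0%R j *: row j B + y1)%R <= C)%MS /\ qf (x 0%R j *: row j B + y1)%R = (x 0%R j * a j 0%R + y2)%R.
    move=> j y1 y2 _ [y1C <-].
    have rC : ((x 0%R j *: row j B)%R <= C)%MS by apply: BC; apply: scalemx_sub; apply: row_sub.
    split; first by rewrite addmx_sub.
    by rewrite Hadd // qf_scale mxE.
  exact: (proj2 (big_rec2 (fun y1 y2 => (y1 <= C)%MS /\ qf y1 = y2) base step)).
have DC : forall v : 'rV_n, (v <= D)%MS -> (v <= C)%MS /\ qf v = 0%R.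
  move=> v /submxP [y ->]; rewrite /D mulmxA; split.
    by apply: BC; apply: submxMl.
  by rewrite qlin -mulmxA mulmx_ker mulmx0 mxE.
have rD : (r.-1 <= \rank D)%N.
  rewrite /D mxrankMfree ?row_base_free // mxrank_ker.
  have := rank_leq_col a; lia.
have G := @griesmer n (\rank D) _ D setT d.+2 erefl.
have : (gr (\rank D) d.+2 <= #|[set: 'I_n]|)%N.
  apply: G => v vD vnz.
  have [vC qv] := DC v vD.
  rewrite wt_wS.
  have h1 := Hmin v vC vnz.
  have h2 := evenE (Hev v vC).
  have h3 := evenE (F2nat0 qv).
  lia.
rewrite cardsT card_ord => H.
have rkE : r = k by rewrite /r -rk.
have rD' : (k.-1 <= \rank D)%N by rewrite -rkE.
have := gr_monok' d.+2 rD'; lia.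
Qed.
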